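(* The set $\{\mathcal A_p\mid p \text{ a prime number}\}$, the variety $\mathcal{SL}$ and the variety $\mathcal{ZM}$ are each definable in $\mathbf{Com}$.
   Context: $\mathbf{Com}$ denotes the lattice of all commutative semigroup varieties with join $\vee$ and meet $\wedge$; a subset (or element) of a lattice $L$ is definable in $L$ if it is the set of elements satisfying some first-order formula with one free variable in the language $\{\vee,\wedge\}$. $\operatorname{var}\Sigma$ denotes the variety defined by identities $\Sigma$; $w=0$ (with $x$ not occurring in $w$) stands for $wx=xw=w$. $\mathcal A_n=\operatorname{var}\{x^ny=y,\ xy=yx\}$, $\mathcal{SL}=\operatorname{var}\{x^2=x,\ xy=yx\}$ (semilattices), $\mathcal{ZM}=\operatorname{var}\{xy=0\}$ (null semigroups). *)

(* Defs.v *)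
From mathcomp Require Import all_boot.
Set Implicit Arguments. Unset Strict Implicit. Unset Printing Implicit Defensive.

Record comSemigroup := ComSemigroup {
  csg_car :> Type;
  csg_op : csg_car -> csg_car -> csg_car;
  csg_opA : forall x y z, csg_op x (csg_op y z) = csg_op (csg_op x y) z;
  csg_opC : forall x y, csg_op x y = csg_op y x }.

(** * Semigroup words over the countable alphabet of letters [nat].
    A (nonempty) word x_{i0} x_{i1} ... x_{ik} is the pair (i0, [:: i1; ...; ik]). *)
Definition word := (nat * seq nat)%type.
Definition identity := (word * word)%type.

Definition weval (S : comSemigroup) (v : nat -> S) (w : word) : S :=
  foldl (fun a i => csg_op a (v i)) (v w.1) w.2.

Definition sat (S : comSemigroup) (e : identity) : Prop :=
  forall v : nat -> S, weval v e.1 = weval v e.2.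

(** A set of identities [Sigma] presents the variety var Sigma (of commutative
    semigroups); an element of Com is represented by such a presentation. *)
Definition presentation := identity -> Prop.

Definition models (Sigma : presentation) (S : comSemigroup) : Prop :=
  forall e, Sigma e -> sat S e.

Definition same_variety (V W : presentation) : Prop :=
  forall S : comSemigroup, models V S <-> models W S.

(** Meet = intersection of the classes: presented by the union of identities. *)
Definition vmeet (V W : presentation) : presentation := fun e => V e \/ W e.
(** Join = smallest variety containing both: presented by all identities
    holding in every member of V and of W. *)
Definition vjoin (V W : presentation) : presentation :=
  fun e => forall S : comSemigroup, (models V S \/ models W S) -> sat S e.

Inductive lterm := LVar of nat | LJoin of lterm & lterm | LMeet of lterm & lterm.

Inductive lform :=
  | FEq of lterm & lterm
  | FNot of lform
  | FAnd of lform & lform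
  | FOr of lform & lform
  | FImp of lform & lform
  | FAll of nat & lform
  | FEx of nat & lform.

Fixpoint teval (env : nat -> presentation) (t : lterm) : presentation :=
  match t with
  | LVar n => env n
  | LJoin a b => vjoin (teval env a) (teval env b)
  | LMeet a b => vmeet (teval env a) (teval env b)
  end.

Definition upd (env : nat -> presentation) (n : nat) (V : presentation) :=
  fun m => if m == n then V else env m.

Fixpoint holds (env : nat -> presentation) (f : lform) : Prop :=
  match f with
  | FEq a b => same_variety (teval env a) (teval env b)
  | FNot g => ~ holds env g
  | FAnd g h => holds env g /\ holds env h
  | FOr g h => holds env g \/ holds env h
  | FImp g h => holds env g -> holds env h
  | FAll n g => forall V, holds (upd env n V) g
  | FEx n g => exists V, holds (upd env n V) g
  end.

Definition definable_set (X : presentation -> Prop) : Prop :=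
  exists phi : lform, forall env, holds env phi <-> X (env 0).

Definition definable_elem (V : presentation) : Prop :=
  definable_set (fun W => same_variety W V).

(** * The specific varieties (letters: x = 0, y = 1, z = 2) *)
Definition comm_id : identity := ((0, [:: 1]), (1, [:: 0])).

(** A_n = var{x^n y = y, xy = yx}  (for n >= 1) *)
Definition A_var (n : nat) : presentation :=
  fun e => e = ((0, rcons (nseq n.-1 0) 1), (1, [::])) \/ e = comm_id.

(** SL = var{x^2 = x, xy = yx} *)
Definition SL_var : presentation :=
  fun e => e = ((0, [:: 0]), (0, [::])) \/ e = comm_id.

(** ZM = var{xy = 0}, i.e. var{xyz = xy, zxy = xy} *)
Definition ZM_var : presentation :=
  fun e => e = ((0, [:: 1; 2]), (0, [:: 1])) \/ e = ((2, [:: 0; 1]), (0, [:: 1])).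

(* Main.v *)
Require Import Defs.
From mathcomp Require Import all_boot.
From Stdlib Require Import Classical Lia Setoid.
Ltac arith := rewrite -?multE -?plusE -?minusE; lia.
Set Implicit Arguments. Unset Strict Implicit. Unset Printing Implicit Defensive.

Section Gen.
Variable S : comSemigroup.
Local Notation op := (@csg_op S).

Lemma opA x y z : op x (op y z) = op (op x y) z. Proof. exact: csg_opA. Qed.
Lemma opC x y : op x y = op y x. Proof. exact: csg_opC. Qed.
Lemma opCA x y z : op x (op y z) = op y (op x z).
Proof. by rewrite opA (opC x y) -opA. Qed.

Definition lprod (v : nat -> S) (x : S) (l : seq nat) :=
  foldl (fun a i => op a (v i)) x l.

Lemma lprod_cons v x i l : lprod v x (i :: l) = lprod v (op x (v i)) l.
Proof. by []. Qed.
Lemma lprod_cat v x l1 l2 : lprod v x (l1 ++ l2) = lprod v (lprod v x l1) l2.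
Proof. exact: foldl_cat. Qed.
Lemma lprod_op v x y l : lprod v (op x y) l = op x (lprod v y l).
Proof. by elim: l y => //= i l IH y; rewrite -opA IH. Qed.
Lemma lprod_front v x l1 i l2 :
  lprod v x (l1 ++ i :: l2) = lprod v x (i :: l1 ++ l2).
Proof.
rewrite lprod_cat lprod_cons [RHS]lprod_cons lprod_cat; congr lprod.
by rewrite (opC x) lprod_op opC.
Qed.

Lemma lprod_perm v x l l' : perm_eq l l' -> lprod v x l = lprod v x l'.
Proof.
elim: l x l' => [|i l IH] x l'.
  by rewrite perm_sym => /perm_nilP ->.
move=> hp; have hi: i \in l' by rewrite -(perm_mem hp) mem_head.
case/splitPr: hi hp => l1 l2 hp.
rewrite lprod_front lprod_cons; apply: IH.
rewrite -(perm_cons i); apply: (perm_trans hp).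
by rewrite -cat1s perm_catCA.
Qed.

Definition lets (w : word) : seq nat := w.1 :: w.2.

Lemma weval_lprod v w : weval v w = lprod v (v w.1) w.2.
Proof. by []. Qed.

Lemma wperm v h t h' t' : perm_eq (h :: t) (h' :: t') ->
  lprod v (v h) t = lprod v (v h') t'.
Proof.
move=> hp; have: h \in h' :: t' by rewrite -(perm_mem hp) mem_head.
rewrite in_cons; case: (eqVneq h h') => [e _|ne /= ht].
  subst h'; apply: lprod_perm; by rewrite -(perm_cons h).
case/splitPr: ht hp => l1 l2 hp.
rewrite lprod_front lprod_cons opC -lprod_cons; apply: lprod_perm.
rewrite -(perm_cons h); apply: (perm_trans hp).
by rewrite -[h' :: (l1 ++ h :: l2)]/((h' :: l1) ++ [:: h] ++ l2) perm_catCA /= perm_refl.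
Qed.

Lemma absorb v w j : (forall j, op (v j) (v j) = v j) -> j \in lets w ->
  op (weval v w) (v j) = weval v w.
Proof.
move=> idem hj; rewrite weval_lprod.
have hp := perm_to_rem hj.
rewrite (@wperm v w.1 w.2 j (rem j (lets w))) //.
have -> : op (lprod v (v j) (rem j (lets w))) (v j) =
  lprod v (v j) (rem j (lets w) ++ [:: j]) by rewrite lprod_cat.
by rewrite lprod_front lprod_cons idem cats0.
Qed.

Lemma content_eq v w1 w2 : (forall j, op (v j) (v j) = v j) ->
  (forall j, (j \in lets w1) = (j \in lets w2)) -> weval v w1 = weval v w2.
Proof.
move=> idem hc.
have key : forall w m, {subset m <= lets w} -> lprod v (weval v w) m = weval v w.
  move=> w; elim=> //= i m IH hs; rewrite absorb //; last by apply: hs; rewrite mem_head.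
  by apply: IH => x hx; apply: hs; rewrite in_cons hx orbT.
have e1 : weval v w1 = op (weval v w1) (weval v w2).
  rewrite -{1}(key w1 (lets w2)); last by move=> x; rewrite hc.
  by rewrite lprod_cons weval_lprod lprod_op.
have e2 : weval v w2 = op (weval v w2) (weval v w1).
  rewrite -{1}(key w2 (lets w1)); last by move=> x; rewrite hc.
  by rewrite lprod_cons [weval v w1]weval_lprod lprod_op.
by rewrite e1 opC -e2.
Qed.

Definition ren (s : nat -> nat) (w : word) : word := (s w.1, map s w.2).
Lemma weval_ren (v : nat -> S) s w : weval v (ren s w) = weval (fun j => v (s j)) w.
Proof.
rewrite /weval /=; case: w => h t /=; elim: t (v (s h)) => //= i t IH x.
Qed.

Definition pw (x : S) k := iter k (fun a => op a x) x.
Lemma pwS x k : pw x k.+1 = op (pw x k) x. Proof. by []. Qed.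
Lemma pw_op x a b : op (pw x a) (pw x b) = pw x (a + b).+1.
Proof.
elim: b => [|b IH]; first by rewrite addn0.
by rewrite pwS opA IH addnS.
Qed.
Lemma pw_pw x a b : pw (pw x a) b = pw x (a.+1 * b + a).
Proof.
elim: b => [|b IH]; first by rewrite muln0.
rewrite pwS IH pw_op; congr pw; arith.
Qed.

Lemma foldl_nseq (f : S -> nat -> S) x k i :
  foldl f x (nseq k i) = iter k (fun a => f a i) x.
Proof. by elim: k x => //= k IH x; rewrite IH -iterSr. Qed.

Definition upw (u g : S) k := iter k (op g) u.

Section Unit.
Variables u g : S.
Hypothesis uu : op u u = u.
Hypothesis ug : op u g = g.

Lemma upw_unitl k : op u (upw u g k) = upw u g k.
Proof. by elim: k => //= k IH; rewrite opCA IH. Qed.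
Lemma upw_unitr k : op (upw u g k) u = upw u g k.
Proof. by rewrite opC upw_unitl. Qed.
Lemma upwD m k : upw u g (m + k) = op (upw u g m) (upw u g k).
Proof.
elim: m => [|m IH]; first by rewrite add0n /= upw_unitl.
by rewrite addSn /= IH opA.
Qed.
Lemma upwS_pw k : upw u g k.+1 = pw g k.
Proof.
elim: k => [|k IH]; first by rewrite /= opC ug.
by rewrite /upw iterS -/(upw u g k.+1) IH pwS opC.
Qed.
Lemma upw_mul_u m k : upw u g m = u -> upw u g (m * k) = u.
Proof.
move=> h; elim: k => [|k IH]; first by rewrite muln0.
by rewrite mulnS upwD h IH.
Qed.
Lemma upw_mod m n : upw u g n = u -> upw u g m = upw u g (m %% n).
Proof.
move=> h; rewrite {1}(divn_eq m n) upwD mulnC upw_mul_u //.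
by rewrite upw_unitl.
Qed.
Lemma upw_gcd m n : upw u g m = u -> upw u g n = u -> upw u g (gcdn m n) = u.
Proof.
elim/ltn_ind: m n => m IH n hm hn.
have [->|m0] := posnP m; first by rewrite gcd0n.
rewrite gcdnE (gtn_eqF m0); apply: IH => //; first exact: ltn_pmod.
by rewrite -upw_mod.
Qed.
Lemma upw_cancel n a b : 0 < n -> upw u g n = u -> upw u g a = upw u g b ->
  b <= a -> upw u g (a - b) = u.
Proof.
move=> n0 hn hab ba.
have hY : op (upw u g b) (upw u g (b * n - b)) = u.
  rewrite -upwD subnKC; last by rewrite leq_pmulr.
  by rewrite mulnC upw_mul_u.
have : op (upw u g a) (upw u g (b * n - b)) = u by rewrite hab.
have -> : upw u g a = op (upw u g (a - b)) (upw u g b) by rewrite -upwD subnK.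
by rewrite -opA hY upw_unitr.
Qed.
End Unit.

Lemma wcount v w (u g : S) i : op u u = u -> op u g = g ->
  (forall j, v j = if j == i then g else u) ->
  weval v w = upw u g (count_mem i (lets w)).
Proof.
move=> uu ug hv.
have key : forall l m, lprod v (upw u g m) l = upw u g (m + count_mem i l).
  elim=> [|j l IH] m; first by rewrite /= addn0.
  rewrite lprod_cons hv /=; case: eqP => [_|ne].
    have -> : op (upw u g m) g = upw u g m.+1 by rewrite opC.
    by rewrite IH add1n addnS.
  by rewrite upw_unitr // IH.
rewrite weval_lprod /lets /=.
have -> : v w.1 = upw u g (w.1 == i).
  by rewrite hv; case: eqP => //= _; rewrite opC ug.
by rewrite key.
Qed.

End Gen.

Definition T_var : presentation := fun e => e = ((0, [::]), (1, [::])).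

Lemma count_flat_iota (f : nat -> nat) M x :
  count_mem x (flatten [seq nseq (f j) j | j <- iota 0 M]) = (x < M) * f x.
Proof.
elim: M => [|M IH]; first by [].
rewrite -addn1 iotaD map_cat flatten_cat count_cat IH /= add0n cats0 count_nseq /=.
rewrite addn1 ltnS; case: (ltngtP x M) => [h|h|->] /=.
- by rewrite addn0.
- by [].
- by rewrite mul0n.
Qed.

Lemma mem_sumn x (s : seq nat) : x \in s -> x <= sumn s.
Proof.
elim: s => //= y s IH; rewrite in_cons => /orP [/eqP ->|/IH h].
  exact: leq_addr.
exact: leq_trans h (leq_addl _ _).
Qed.

Section Models.
Variable S : comSemigroup.
Local Notation op := (@csg_op S).

Lemma weval_A n (v : nat -> S) :
  weval v (0, rcons (nseq n.-1 0) 1) = op (pw (v 0) n.-1) (v 1).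
Proof. by rewrite /weval /= foldl_rcons foldl_nseq. Qed.

Lemma modelsA n : models (A_var n) S <-> forall x y : S, op (pw x n.-1) y = y.
Proof.
split.
  move=> h x y; have := h _ (or_introl erefl) (fun j => if j == 0 then x else y).
  by rewrite /sat weval_A.
move=> h e [->|->] v; first by rewrite /sat weval_A h.
by rewrite /sat /weval /= opC.
Qed.

Lemma modelsSL : models SL_var S <-> forall x : S, op x x = x.
Proof.
split.
  by move=> h x; have := h _ (or_introl erefl) (fun j => x).
move=> h e [->|->] v; first by rewrite /sat /weval /= h.
by rewrite /sat /weval /= opC.
Qed.

Lemma modelsZM : models ZM_var S <-> forall x y z : S, op (op x y) z = op x y.
Proof.
split.
  move=> h x y z; have := h _ (or_introl erefl) (fun j => if j == 0 then x else if j == 1 then y else z).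
  by [].
move=> h e [->|->] v; rewrite /sat /weval /=; first exact: h.
rewrite -opA (opC (v 2)); exact: h.
Qed.

Lemma modelsT : models T_var S <-> forall x y : S, x = y.
Proof.
split.
  by move=> h x y; have := h _ erefl (fun j => if j == 0 then x else y).
by move=> h e -> v; apply: h.
Qed.

Lemma null_const : models ZM_var S -> forall x y z w : S, op x y = op z w.
Proof.
move/modelsZM=> h x y z w.
by rewrite -(h x y (op z w)) opC h.
Qed.

Lemma CL n (v : nat -> S) w1 w2 : 0 < n -> models (A_var n) S ->
  (forall i, count_mem i (lets w1) = count_mem i (lets w2) %[mod n]) ->
  weval v w1 = weval v w2.
Proof.
move=> n0 /modelsA hA hc.
set u := pw (v 0) n.-1.
have hu : forall y, op u y = y by move=> y; apply: hA.
pose Q l := lprod v u l.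
have hw : forall w, weval v w = Q (lets w).
  by move=> w; rewrite /Q /lets lprod_cons hu.
have hnseq : forall x k j, lprod v x (nseq k.+1 j) = op x (pw (v j) k).
  move=> x k j; elim: k x => [|k IH] x; first by [].
  by rewrite [nseq _ _]/= lprod_cons IH pwS -opA (opC (v j)).
have hblk : forall k l j, Q (l ++ nseq (n * k) j) = Q l.
  elim=> [|k IH] l j; first by rewrite muln0 cats0.
  rewrite mulnS nseqD catA IH /Q lprod_cat.
  have -> : nseq n j = nseq n.-1.+1 j by rewrite prednK.
  by rewrite hnseq opC hA.
have hflat : forall (s : seq nat) f l,
    Q (l ++ flatten [seq nseq (n * f j) j | j <- s]) = Q l.
  elim=> [|j s IH] f l; first by rewrite cats0.
  by rewrite /= catA IH hblk.
pose M := (sumn (lets w1 ++ lets w2)).+1.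
pose Red l := flatten [seq nseq (count_mem j l %% n) j | j <- iota 0 M].
pose Blk l := flatten [seq nseq (n * (count_mem j l %/ n)) j | j <- iota 0 M].
have hdec : forall l, {subset l <= lets w1 ++ lets w2} -> Q l = Q (Red l).
  move=> l hs; rewrite -[RHS](hflat (iota 0 M) (fun j => count_mem j l %/ n)).
  apply: lprod_perm; apply/allP => x _; apply/eqP.
  rewrite count_cat.
  rewrite (count_flat_iota (fun j => count_mem j l %% n)).
  rewrite (count_flat_iota (fun j => n * (count_mem j l %/ n))).
  case: (ltnP x M) => hx.
    by rewrite !mul1n addnC mulnC -divn_eq.
  rewrite !mul0n; apply/count_memPn; apply/negP => /hs /mem_sumn.
  by rewrite leqNgt hx.
rewrite !hw (hdec (lets w1)); last by move=> x hx; rewrite mem_cat hx.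
rewrite (hdec (lets w2)); last by move=> x hx; rewrite mem_cat hx orbT.
rewrite /Red; congr (Q (flatten _)); apply: eq_map => j.
by rewrite hc.
Qed.

End Models.

Definition le (V W : presentation) := forall S, models V S -> models W S.
Definition triv (V : presentation) := forall S, models V S -> forall x y : S, x = y.
Definition atomS V := ~ triv V /\ forall Y, le V Y \/ triv (vmeet V Y).
Definition UAS A C := le A C /\ ~ same_variety A C /\
  forall B, atomS B -> le B C -> same_variety B A.

Lemma models_vmeet V W S : models (vmeet V W) S <-> models V S /\ models W S.
Proof.
split=> [h|[h1 h2] e [he|he]]; last 2 first.
- exact: h1.
- exact: h2.
by split=> e he; apply: h; [left|right].
Qed.

Lemma triv_models V (S : comSemigroup) : (forall x y : S, x = y) -> models V S.
Proof. by move=> h e _ v; apply: h. Qed.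

Lemma same_meet V W : same_variety (vmeet V W) V <-> le V W.
Proof.
split=> [h S hS|h S]; first by have /h/models_vmeet[] := hS.
rewrite models_vmeet; split=> [[]//|hS]; split=> //; exact: h.
Qed.

Lemma same_sym V W : same_variety V W -> same_variety W V.
Proof. by move=> h S; rewrite h. Qed.
Lemma same_trans V W X : same_variety V W -> same_variety W X -> same_variety V X.
Proof. by move=> h1 h2 S; rewrite h1 h2. Qed.

Lemma same_triv V W : triv V -> (same_variety W V <-> triv W).
Proof.
move=> hV; split=> [h S /h|hW S]; first exact: hV.
by split=> hS; apply: triv_models; [apply: hW|apply: hV].
Qed.

Lemma triv_same V W : same_variety V W -> triv V -> triv W.
Proof. by move=> h hV S /h; apply: hV. Qed.
Lemma le_same_l V V' W : same_variety V V' -> le V W -> le V' W.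
Proof. by move=> h hl S /h /hl. Qed.
Lemma le_same_r V W W' : same_variety W W' -> le V W -> le V W'.
Proof. by move=> h hl S /hl /h. Qed.
Lemma le_trans V W X : le V W -> le W X -> le V X.
Proof. by move=> h1 h2 S /h1 /h2. Qed.
Lemma same_le V W : same_variety V W -> le V W.
Proof. by move=> h S /h. Qed.
Lemma le_antisym V W : le V W -> le W V -> same_variety V W.
Proof. by move=> h1 h2 S; split; [apply: h1|apply: h2]. Qed.

Lemma meet_same V V' W : same_variety V V' -> same_variety (vmeet V W) (vmeet V' W).
Proof. by move=> h S; rewrite !models_vmeet h. Qed.

Lemma atom_same V W : same_variety V W -> atomS V -> atomS W.
Proof.
move=> h [nt hA]; split; first by move=> tW; apply: nt; apply: triv_same tW; apply: same_sym.
move=> Y; case: (hA Y) => [hl|ht]; [left; exact: le_same_l hl|right].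
exact: triv_same (meet_same Y h) ht.
Qed.

Lemma UAS_same A A' C : same_variety A A' -> UAS A C -> UAS A' C.
Proof.
move=> h [h1 [h2 h3]]; split; first exact: le_same_l h1.
split; first by move=> h4; apply: h2; apply: same_trans h4.
by move=> B hB hBC; apply: same_trans (h3 B hB hBC) h.
Qed.

Lemma atom_le a b : atomS b -> ~ triv a -> le a b -> same_variety a b.
Proof.
move=> [_ hb] nt hab; case: (hb a) => [hba|ht]; first exact: le_antisym.
case: nt => S hS; apply: ht; rewrite models_vmeet; split=> //; exact: hab.
Qed.

Lemma not_le V W : ~ le V W -> exists S, models V S /\ exists e, W e /\ ~ sat S e.
Proof.
move=> h; apply: NNPP => hn; apply: h => S hS e hW; apply: NNPP => hs.
by apply: hn; exists S; split=> //; exists e.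
Qed.

Lemma sat_swap (S : comSemigroup) (e : identity) : sat S e -> sat S (e.2, e.1).
Proof. by move=> h v; rewrite /= h. Qed.

Section Sep.
Variable T : comSemigroup.
Local Notation op := (@csg_op T).

Lemma weval_ext (v v' : nat -> T) w : (forall j, v j = v' j) -> weval v w = weval v' w.
Proof.
move=> h; rewrite /weval h; case: w => h0 t /=; elim: t (v' h0) => //= i t IH x.
by rewrite h IH.
Qed.

Lemma pw_idem (x : T) k : op x x = x -> pw x k = x.
Proof. by move=> h; elim: k => //= k IH; rewrite IH. Qed.

Lemma sep2 e i (a b : T) : op a a = a -> op b b = b -> sat T e ->
  i \in lets e.1 -> i \notin lets e.2 -> a = b \/ op a b = b.
Proof.
case: e => w1 [h' t'] /=.
move=> ha hb hs h1 h2.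
pose s j := if j == i then 0 else 1.
pose v' j := if j == 0 then a else b.
have hid : forall j, op (v' j) (v' j) = v' j by move=> j; rewrite /v'; case: ifP.
have hv : forall w, weval (fun j => if j == i then a else b) w = weval v' (ren s w).
  move=> w; rewrite weval_ren; apply: weval_ext => j.
  by rewrite /v' /s; case: (j == i).
have hl : forall w, lets (ren s w) = map s (lets w) by [].
have := hs (fun j => if j == i then a else b); rewrite /= !hv.
have -> : weval v' (ren s (h', t')) = weval v' (1, [::]).
  apply: content_eq => // j; rewrite hl.
  have -> : (j \in lets (1, [::])) = (j == 1) by rewrite /lets !inE.
  apply/mapP/idP.
    case=> k hk ->; rewrite /s; case: ifP => // /eqP ek.
    by rewrite -ek hk in h2.
  move/eqP ->; exists h'; first exact: mem_head.
  by rewrite /s; case: eqP => // eh; rewrite -eh mem_head in h2.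
case: (boolP (has (fun j => j != i) (lets w1))) => hh.
  have -> : weval v' (ren s w1) = weval v' (0, [:: 1]).
    apply: content_eq => // j; rewrite hl.
    have -> : (j \in lets (0, [:: 1])) = (j <= 1) by rewrite /lets !inE; case: j => [|[|j]].
    apply/mapP/idP.
      by case=> k _ ->; rewrite /s; case: ifP.
    case: j => [|[|j]] // _.
      by exists i => //; rewrite /s eqxx.
    by case/hasP: hh => k hk hki; exists k => //; rewrite /s (negbTE hki).
  by rewrite /weval /v' /= => ->; right.
have -> : weval v' (ren s w1) = weval v' (0, [::]).
  apply: content_eq => // j; rewrite hl.
  have -> : (j \in lets (0, [::])) = (j == 0) by rewrite /lets !inE.
  apply/mapP/idP.
    case=> k hk ->; rewrite /s; case: ifP => // hki.
    by move/hasPn: hh => /(_ k hk); rewrite hki.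
  by move/eqP ->; exists i => //; rewrite /s eqxx.
by rewrite /weval /v' /= => ->; left.
Qed.

Lemma SL_sep e i : models SL_var T -> sat T e ->
  i \in lets e.1 -> i \notin lets e.2 -> forall a b : T, a = b.
Proof.
move/modelsSL=> hSL hs h1 h2 a b.
case: (sep2 (hSL a) (hSL b) hs h1 h2) => // hab.
case: (sep2 (hSL b) (hSL a) hs h1 h2) => // hba.
by rewrite -hba opC hab.
Qed.

Lemma null_lprod (v : nat -> T) a b l : models ZM_var T ->
  lprod v (op a b) l = op a b.
Proof.
move/modelsZM=> h; elim: l a b => // j l IH a b.
by rewrite lprod_cons h IH.
Qed.

Lemma null_sep x w : models ZM_var T -> sat T ((x, [::]), w) -> w <> (x, [::]) ->
  forall a b : T, a = b.
Proof.
move=> hZ hs hw a b; case: w hs hw => h [|j t] hs hw.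
  have := hs (fun k => if k == x then a else b); rewrite /weval /= eqxx.
  by case: eqP => [ex|]; [rewrite ex in hw|].
have hsq : forall c : T, c = op c c.
  move=> c; have := hs (fun _ => c); rewrite /weval /= -/(lprod _ _ _).
  by rewrite -/(lprod (fun _ => c) (op c c) t) null_lprod.
by rewrite (hsq a) (hsq b) (null_const hZ a a b b).
Qed.

End Sep.

Definition S2 : comSemigroup := @ComSemigroup bool andb andbA andbC.
Definition N2 : comSemigroup :=
  @ComSemigroup bool (fun _ _ => false) (fun _ _ _ => erefl) (fun _ _ => erefl).

Lemma S2_SL : models SL_var S2. Proof. by apply/modelsSL; case. Qed.
Lemma S2_nt : ~ (forall x y : S2, x = y). Proof. by move/(_ true false). Qed.
Lemma N2_ZM : models ZM_var N2. Proof. by apply/modelsZM. Qed.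
Lemma N2_nt : ~ (forall x y : N2, x = y). Proof. by move/(_ true false). Qed.
Lemma S2_notZM : ~ models ZM_var S2.
Proof. by move/modelsZM/(_ true true false). Qed.
Lemma S2_notA n : ~ models (A_var n) S2.
Proof.
move/modelsA/(_ false true); rewrite pw_idem //.
Qed.
Lemma N2_notA n : ~ models (A_var n) N2.
Proof. by move/modelsA/(_ true true). Qed.

From mathcomp Require Import all_algebra.
Import GRing.Theory.

Definition Zs (n : nat) : comSemigroup :=
  @ComSemigroup 'Z_n (@GRing.add _) (@addrA _) (@addrC _).

Lemma pw_Zs n (x : Zs n) k : pw x k = (x *+ k.+1)%R.
Proof.
elim: k => [|k IH]; first by rewrite /= GRing.mulr1n.
by rewrite pwS IH [in RHS]GRing.mulrSr.
Qed.

Lemma Zs_A n m : 1 < n -> 0 < m -> models (A_var m) (Zs n) <-> n %| m.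
Proof.
move=> n1 m0; rewrite modelsA; split.
  move/(_ 1%R 0%R) => /=; rewrite pw_Zs prednK // GRing.addr0 => h.
  have := val_Zp_nat n1 m; rewrite h /= => hv.
  by rewrite /dvdn -hv.
move=> hd x y; rewrite /= pw_Zs prednK // -GRing.mulr_natr.
have -> : (m%:R : 'Z_n)%R = 0%R.
  by apply: val_inj; rewrite /= val_Zp_nat //; apply/eqP.
by rewrite /= GRing.mulr0 GRing.add0r.
Qed.

Lemma Zs_nt n : 1 < n -> ~ (forall x y : Zs n, x = y).
Proof. move=> n1 /(_ 1%R 0%R) /eqP; by rewrite oner_eq0. Qed.

Lemma Zs_notSL n : 1 < n -> ~ models SL_var (Zs n).
Proof.
move=> n1 /modelsSL /(_ 1%R) /= h.
have : (1 + 1 = 1 + 0 :> 'Z_n)%R by rewrite addr0.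
by move/addrI/eqP; rewrite oner_eq0.
Qed.

Lemma SLatom : atomS SL_var.
Proof.
split; first by move=> h; apply: S2_nt; exact: h _ S2_SL.
move=> Y; case: (classic (le SL_var Y)) => hl; [by left|right].
case: (not_le hl) => S [hS [e [hY hs]]].
have [i hi] : exists i, (i \in lets e.1) != (i \in lets e.2).
  apply: NNPP => hn; apply: hs => v; apply: content_eq; first by move: hS => /modelsSL.
  move=> j; case E: ((j \in lets e.1) == (j \in lets e.2)); first exact/eqP.
  by case: hn; exists j; rewrite E.
move=> T /models_vmeet [hT hYT] x y; have hsT := hYT e hY.
move: hi; case: (boolP (i \in lets e.1)) => h1; case: (boolP (i \in lets e.2)) => h2 //= _.
  exact: SL_sep hT hsT h1 h2 x y.
exact: SL_sep hT (sat_swap hsT) h2 h1 x y.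
Qed.

Lemma foldl_const (T : Type) (f : T -> T) z (t : seq nat) :
  foldl (fun x _ => f x) z t = iter (size t) f z.
Proof. by elim: t z => //= j t IH z; rewrite IH -iterSr. Qed.

Lemma weval_const (T : comSemigroup) (a : T) w : weval (fun _ => a) w = pw a (size w.2).
Proof. by rewrite /weval foldl_const. Qed.

Lemma null_shape (N : comSemigroup) e : models ZM_var N -> ~ sat N e ->
  exists x w, w <> (x, [::]) /\ forall T, sat T e -> sat T ((x, [::]), w).
Proof.
move=> hN; case: e => [[h1 t1] [h2 t2]] hs.
case: t1 hs => [|j1 t1] hs.
  exists h1, (h2, t2); split=> [he|T //].
  by apply: hs; rewrite he => v.
case: t2 hs => [|j2 t2] hs.
  exists h2, (h1, j1 :: t1); split=> [he|T /sat_swap //].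
  by apply: hs; rewrite he => v.
case: hs => v; rewrite /weval /= -/(lprod v _ t1) -/(lprod v _ t2) !null_lprod //.
exact: null_const.
Qed.

Lemma ZMatom : atomS ZM_var.
Proof.
split; first by move=> h; apply: N2_nt; exact: h _ N2_ZM.
move=> Y; case: (classic (le ZM_var Y)) => hl; [by left|right].
case: (not_le hl) => S [hS [e [hY hs]]].
case: (null_shape hS hs) => x [w [hw hT]].
move=> T /models_vmeet [hZ hYT].
exact: null_sep hZ (hT _ (hYT e hY)) hw.
Qed.

Lemma A_unit (T : comSemigroup) p : models (A_var p) T ->
  forall a b : T, pw a p.-1 = pw b p.-1.
Proof.
move/modelsA=> hA a b.
by rewrite -{1}(hA b (pw a p.-1)) csg_opC hA.
Qed.

Lemma A_sep (T : comSemigroup) p e i : prime p -> models (A_var p) T -> sat T e ->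
  count_mem i (lets e.1) %% p <> count_mem i (lets e.2) %% p ->
  forall a b : T, a = b.
Proof.
move=> pp hT hs hne.
have p0 := prime_gt0 pp.
suff ha : forall a : T, a = pw a p.-1.
  by move=> a b; rewrite (ha a) (ha b) (A_unit hT a b).
move=> a; move/modelsA: (hT) => hA.
set u := pw a p.-1.
have uu : csg_op u u = u by apply: hA.
have ua : csg_op u a = a by apply: hA.
have hw : forall w, weval (fun j => if j == i then a else u) w
                    = upw u a (count_mem i (lets w)).
  by move=> w; apply: wcount.
have hup : upw u a p = u by rewrite -(prednK p0) upwS_pw.
have h12 := hs (fun j => if j == i then a else u); rewrite !hw in h12.
have key : forall c1 c2, upw u a c1 = upw u a c2 -> c2 <= c1 ->
    c1 %% p <> c2 %% p -> a = u.
  move=> c1 c2 he hc hn.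
  have h1 := upw_cancel uu p0 hup he hc.
  have hg := upw_gcd uu h1 hup.
  have : coprime p (c1 - c2).
    rewrite prime_coprime // -eqn_mod_dvd //; apply/negP => /eqP; exact: hn.
  rewrite /coprime gcdnC => /eqP hg1; rewrite hg1 in hg.
  by rewrite -hg -[1]/(0.+1) upwS_pw.
case: (leqP (count_mem i (lets e.2)) (count_mem i (lets e.1))) => hc.
  exact: key h12 hc hne.
apply: key (esym h12) (ltnW hc) _; move=> h; exact: hne (esym h).
Qed.

Lemma Aatom p : prime p -> atomS (A_var p).
Proof.
move=> pp; have p1 := prime_gt1 pp.
split.
  move=> h; apply: (Zs_nt p1); apply: h; apply/Zs_A => //; exact: prime_gt0.
move=> Y; case: (classic (le (A_var p) Y)) => hl; [by left|right].
case: (not_le hl) => S [hS [e [hY hs]]].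
have [i hi] : exists i, count_mem i (lets e.1) %% p <> count_mem i (lets e.2) %% p.
  apply: NNPP => hn; apply: hs => v; apply: (CL _ (prime_gt0 pp) hS) => j.
  by apply: NNPP => hj; apply: hn; exists j.
move=> T /models_vmeet [hT hYT].
exact: A_sep pp hT (hYT e hY) hi.
Qed.

Lemma ORD V (S : comSemigroup) (u g : S) d : models V S ->
  csg_op u u = u -> csg_op u g = g -> 0 < d -> upw u g d = u ->
  (forall k, upw u g k = u -> d %| k) -> le (A_var d) V.
Proof.
move=> hS uu ug d0 hd hord S' hS' e hV v.
apply: (CL _ d0 hS') => i.
have hw : forall w, weval (fun j => if j == i then g else u) w
                    = upw u g (count_mem i (lets w)).
  by move=> w; apply: wcount.
have := hS e hV (fun j => if j == i then g else u); rewrite !hw => h12.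
case: (leqP (count_mem i (lets e.2)) (count_mem i (lets e.1))) => hc.
  apply/eqP; rewrite eqn_mod_dvd //; apply: hord; exact: (upw_cancel uu d0 hd h12 hc).
apply/esym/eqP; rewrite eqn_mod_dvd ?(ltnW hc) //; apply: hord.
exact: (upw_cancel uu d0 hd (esym h12) (ltnW hc)).
Qed.

Lemma upw_upw (S : comSemigroup) (u g : S) a b : csg_op u u = u -> csg_op u g = g ->
  upw u (upw u g a) b = upw u g (a * b).
Proof.
move=> uu ug; elim: b => [|b IH]; first by rewrite muln0.
by rewrite /= IH mulnS upwD.
Qed.

Lemma ex_min (P : nat -> Prop) n : P n -> exists m, P m /\ forall m', m' < m -> ~ P m'.
Proof.
elim/ltn_ind: n => n IH hn.
case: (classic (exists m', m' < n /\ P m')) => [[m' [hlt hm']]|hno].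
  exact: IH m' hlt hm'.
by exists n; split=> // m' hm' hP; apply: hno; exists m'.
Qed.

Lemma exists_fail V (S : comSemigroup) : ~ models V S -> exists e, V e /\ ~ sat S e.
Proof.
move=> hn; apply: NNPP => h; apply: hn => e hV; apply: NNPP => hs.
by apply: h; exists e.
Qed.

Lemma per_of_null V (N : comSemigroup) : models ZM_var N -> ~ models V N -> ~ triv V ->
  exists k, 0 < k /\ forall T, models V T -> forall a : T, pw a k = a.
Proof.
move=> hN hnV nt.
have [e [hVe hs]] := exists_fail hnV.
case: (null_shape hN hs) => x [[h t] [hw hT]].
case: t hw hT => [|j t] hw hT.
  case: nt => T hVT a b.
  have := hT T (hVT e hVe) (fun k => if k == x then a else b); rewrite /weval /= eqxx.
  by case: eqP => [ex|] //; rewrite ex in hw.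
exists (size (j :: t)); split=> // T hVT a.
have := hT T (hVT e hVe) (fun _ => a); rewrite !weval_const => h'.
exact: (esym h').
Qed.

Lemma pw_period (T : comSemigroup) (t : T) k j : pw t k = t -> pw t (j + k) = pw t j.
Proof.
move=> h; elim: j => [|j IH]; first by rewrite add0n.
by rewrite addSn pwS IH.
Qed.

Lemma content_diff (S : comSemigroup) e : models SL_var S -> ~ sat S e ->
  exists i, (i \in lets e.1) != (i \in lets e.2).
Proof.
move=> hS hs; apply: NNPP => hn; apply: hs => v; apply: content_eq.
  by move: hS => /modelsSL.
move=> j; case E: ((j \in lets e.1) == (j \in lets e.2)); first exact/eqP.
by case: hn; exists j; rewrite E.
Qed.

Lemma grp_of_SL V (S : comSemigroup) k : models SL_var S -> ~ models V S -> 0 < k ->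
  (forall T, models V T -> forall a : T, pw a k = a) -> le V (A_var k).
Proof.
move=> hS hnV k0 hper.
have [e [hVe hs]] := exists_fail hnV.
have [i hi] := content_diff hS hs.
move=> T hT; apply/modelsA => s t.
have hp := hper T hT.
pose E (x : T) := pw x k.-1.
have Eid : forall x, csg_op (E x) (E x) = E x.
  move=> x; rewrite /E pw_op.
  have -> : (k.-1 + k.-1).+1 = k.-1 + k by rewrite -addnS prednK.
  exact: pw_period.
have Et : forall x, csg_op (E x) x = x.
  by move=> x; rewrite /E -pwS prednK //; exact: hp.
have hst : csg_op (E s) (E t) = E t.
  have hsT := hT e hVe.
  move: hi; case: (boolP (i \in lets e.1)) => h1; case: (boolP (i \in lets e.2)) => h2 //= _.
    by case: (sep2 (Eid s) (Eid t) hsT h1 h2) => [->|] //; apply: Eid.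
  by case: (sep2 (Eid s) (Eid t) (sat_swap hsT) h2 h1) => [->|] //; apply: Eid.
transitivity (csg_op (E s) (csg_op (E t) t)); first by rewrite Et.
by rewrite csg_opA hst Et.
Qed.

Lemma A1_triv : triv (A_var 1).
Proof.
move=> T /modelsA hA x y.
by rewrite -(hA y x) csg_opC hA.
Qed.

Lemma A_nt p : prime p -> ~ triv (A_var p).
Proof.
move=> pp h; apply: (Zs_nt (prime_gt1 pp)); apply: h.
by apply/Zs_A; rewrite ?(prime_gt1 pp) ?(prime_gt0 pp) ?dvdnn.
Qed.

Lemma not_models_A (S : comSemigroup) r : ~ models (A_var r) S ->
  exists s t : S, csg_op (pw s r.-1) t <> t.
Proof.
move=> hn; apply: NNPP => h; apply: hn; apply/modelsA => s t.
apply: NNPP => h'; apply: h; by exists s, t.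
Qed.

Lemma group_atom W k : atomS W -> 0 < k -> le W (A_var k) ->
  exists p, prime p /\ same_variety W (A_var p).
Proof.
move=> hW; elim/ltn_ind: k => k IH k0 hk.
case: (ltngtP k 1) => [|hk1|ek].
- by rewrite ltnS leqn0 => /eqP k00; rewrite k00 in k0.
- set p := pdiv k.
  have pp : prime p := pdiv_prime hk1.
  have pd : p %| k := pdiv_dvd k.
  set r := k %/ p.
  have hrk : r * p = k := divnK pd.
  have r0 : 0 < r by rewrite divn_gt0 ?(prime_gt0 pp) //; exact: dvdn_leq k0 pd.
  have rk : r < k := ltn_Pdiv (prime_gt1 pp) k0.
  case: (classic (le W (A_var r))) => hl; first exact: IH r rk r0 hl.
  have [S [hS hnA]] : exists S, models W S /\ ~ models (A_var r) S.
    apply: NNPP => hn; apply: hl => S hS; apply: NNPP => h; apply: hn; by exists S.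
  have [s [t hst]] := not_models_A hnA.
  move/modelsA: (hk S hS) => hA.
  set u := pw s k.-1.
  have uu : csg_op u u = u by apply: hA.
  have us : csg_op u s = s by apply: hA.
  set g := upw u s r.
  have ug : csg_op u g = g := upw_unitl s uu r.
  have hg : g = pw s r.-1 by rewrite /g -(prednK r0) upwS_pw.
  have hgp : upw u g p = u.
    by rewrite /g upw_upw // hrk -(prednK k0) upwS_pw.
  have hord : forall j, upw u g j = u -> p %| j.
    move=> j hj; apply: NNPP => hnd.
    have hc : gcdn j p = 1.
      apply/eqP; rewrite gcdnC -/(coprime p j) prime_coprime //; exact/negP.
    have := upw_gcd uu hj hgp; rewrite hc -[1]/(0.+1) upwS_pw // => /= hgu.
    by apply: hst; rewrite -hg hgu; apply: hA.
  have hle := ORD hS uu ug (prime_gt0 pp) hgp hord.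
  exists p; split=> //; apply: same_sym; apply: atom_le hW _ hle.
  exact: A_nt.
- by case: hW => nt _; case: nt => T /hk; rewrite ek; apply: A1_triv.
Qed.

Lemma atom_class W : atomS W -> same_variety W SL_var \/ same_variety W ZM_var \/
  exists p, prime p /\ same_variety W (A_var p).
Proof.
move=> hW; have [nt hA] := hW.
case: (hA SL_var) => [hl|htS]; first by left; apply: atom_le SLatom nt hl.
case: (hA ZM_var) => [hl|htZ]; first by right; left; apply: atom_le ZMatom nt hl.
right; right.
have nS2 : ~ models W S2.
  move=> h; apply: S2_nt; apply: htS; apply/models_vmeet; split=> //; exact: S2_SL.
have nN2 : ~ models W N2.
  move=> h; apply: N2_nt; apply: htZ; apply/models_vmeet; split=> //; exact: N2_ZM.
case: (per_of_null N2_ZM nN2 nt) => k [k0 hper].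
have := grp_of_SL S2_SL nS2 k0 hper.
exact: group_atom hW k0.
Qed.


Lemma arith1 a b : 0 < a -> 0 < b -> a.-1.+1 * b.-1 + a.-1 = (a * b).-1.
Proof. case: a => // a _; case: b => // b _ /=; rewrite mulnS mulSn; arith. Qed.

Lemma arith2 a b : 0 < a -> 0 < b -> (a.-1 + b.-1).+1 = b.-1 + a.
Proof. case: a => // a _; case: b => // b _ /=; arith. Qed.

Lemma not_le_ex V W : ~ le V W -> exists S, models V S /\ ~ models W S.
Proof.
move=> hn; apply: NNPP => h; apply: hn => S hS; apply: NNPP => h'; apply: h.
by exists S.
Qed.

Lemma ZM_ne_SL : ~ same_variety ZM_var SL_var.
Proof. by move=> h; apply: S2_notZM; apply/h; exact: S2_SL. Qed.

Lemma A_ne_SL p : prime p -> ~ same_variety (A_var p) SL_var.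
Proof.
move=> pp h; apply: (Zs_notSL (prime_gt1 pp)); apply/h.
by apply/Zs_A; rewrite ?(prime_gt1 pp) ?(prime_gt0 pp) ?dvdnn.
Qed.

Lemma noUA_SL C : ~ UAS SL_var C.
Proof.
case=> hle [hne hat].
have ntC : ~ triv C by move=> ht; apply: S2_nt; apply: ht; exact: hle _ S2_SL.
have nZ : ~ le ZM_var C by move=> h; exact: ZM_ne_SL (hat _ ZMatom h).
have [N [hN hnC]] := not_le_ex nZ.
case: (per_of_null hN hnC ntC) => k [k0 hper].
have [S [hS hnS]] : exists S, models C S /\ ~ models SL_var S.
  apply: not_le_ex => h; apply: hne; exact: le_antisym.
have [s hs] : exists s : S, csg_op s s <> s.
  apply: NNPP => h; apply: hnS; apply/modelsSL => x; apply: NNPP => h'; apply: h.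
  by exists x.
have [m [[m0 hm] hmin]] := ex_min (P := fun m => 0 < m /\ pw s m = s) (conj k0 (hper S hS s)).
have m1 : 1 < m.
  case: (ltngtP m 1) => // [|em]; first by rewrite ltnS leqn0 => /eqP e0; rewrite e0 in m0.
  by rewrite em in hm.
set q := pdiv m.
have pq : prime q := pdiv_prime m1.
have qd : q %| m := pdiv_dvd m.
set r := m %/ q.
have hrq : r * q = m := divnK qd.
have r0 : 0 < r by rewrite divn_gt0 ?(prime_gt0 pq) //; exact: dvdn_leq m0 qd.
have rm : r < m := ltn_Pdiv (prime_gt1 pq) m0.
set u := pw s m.-1.
have us : csg_op u s = s by rewrite /u -pwS prednK.
have uu : csg_op u u = u.
  rewrite /u pw_op; have -> : (m.-1 + m.-1).+1 = m.-1 + m by rewrite -addnS prednK.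
  exact: pw_period.
set g := pw s r.-1.
have ug : csg_op u g = g.
  rewrite /u /g pw_op; rewrite arith2 //.
  exact: pw_period.
have hgq : upw u g q = u.
  rewrite -(prednK (prime_gt0 pq)) upwS_pw // /g pw_pw /u; congr pw.
  by rewrite arith1 ?(prime_gt0 pq) // hrq.
have hord : forall j, upw u g j = u -> q %| j.
  move=> j hj; apply: NNPP => hnd.
  have hc : gcdn j q = 1.
    apply/eqP; rewrite gcdnC -/(coprime q j) prime_coprime //; exact/negP.
  have := upw_gcd uu hj hgq; rewrite hc -[1]/(0.+1) upwS_pw // => /= hgu.
  apply: (hmin r rm); split=> //.
  by rewrite -(prednK r0) pwS -/g hgu.
have hle' := ORD hS uu ug (prime_gt0 pq) hgq hord.
exact: A_ne_SL pq (hat _ (Aatom pq) hle').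
Qed.

Lemma A_div d d' : 0 < d -> 0 < d' -> d %| d' -> le (A_var d) (A_var d').
Proof.
move=> d0 d'0 hd S /modelsA hA; apply/modelsA => x y.
set u := pw x d.-1.
have uu : csg_op u u = u by apply: hA.
have ux : csg_op u x = x by apply: hA.
have hu : upw u x d = u by rewrite -(prednK d0) upwS_pw.
rewrite -(upwS_pw ux) prednK // -(divnK hd) mulnC (upw_mul_u uu _ hu).
exact: hA.
Qed.

Lemma UA_A_group p C : prime p -> UAS (A_var p) C ->
  exists b, same_variety C (A_var (p ^ b)).
Proof.
move=> pp [hle [hne hat]].
have ntC : ~ triv C.
  by move=> ht; apply: (A_nt pp) => S hS; apply: ht; exact: hle.
have nZ : ~ le ZM_var C.
  move=> h; have := hat _ ZMatom h => hs.
  by apply: (@N2_notA p); apply/hs; exact: N2_ZM.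
have nS : ~ le SL_var C.
  move=> h; have := hat _ SLatom h => hs.
  by apply: (@S2_notA p); apply/hs; exact: S2_SL.
have [N [hN hnC]] := not_le_ex nZ.
case: (per_of_null hN hnC ntC) => k [k0 hper].
have [S2' [hS2 hnS2]] := not_le_ex nS.
have hCk := grp_of_SL hS2 hnS2 k0 hper.
have hpow : forall d, 0 < d -> le C (A_var d) -> exists b, le C (A_var (p ^ b)).
  elim/ltn_ind => d IH d0 hd.
  case: (classic (exists q, prime q /\ q %| d /\ q <> p)) => [[q [qp [qd qne]]]|hno].
    have hqd : d %/ q * q = d := divnK qd.
    have dq0 : 0 < d %/ q by rewrite divn_gt0 ?(prime_gt0 qp) //; exact: dvdn_leq d0 qd.
    apply: (IH (d %/ q)) => //; first exact: ltn_Pdiv (prime_gt1 qp) d0.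
    apply: NNPP => hn.
    have [S [hS hnA]] := not_le_ex hn.
    have [s [t hst]] := not_models_A hnA.
    move/modelsA: (hd S hS) => hA.
    set u := pw s d.-1.
    have uu : csg_op u u = u by apply: hA.
    set g := upw u s (d %/ q).
    have ug : csg_op u g = g := upw_unitl s uu _.
    have hg : g = pw s (d %/ q).-1 by rewrite /g -(prednK dq0) upwS_pw // hA.
    have hgp : upw u g q = u.
      by rewrite /g upw_upw ?hA // hqd -(prednK d0) upwS_pw ?hA.
    have hord : forall j, upw u g j = u -> q %| j.
      move=> j hj; apply: NNPP => hnd.
      have hc : gcdn j q = 1.
        apply/eqP; rewrite gcdnC -/(coprime q j) prime_coprime //; exact/negP.
      have := upw_gcd uu hj hgp; rewrite hc -[1]/(0.+1) upwS_pw // => /= hgu.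
      by apply: hst; rewrite -hg hgu; apply: hA.
    have hle' := ORD hS uu ug (prime_gt0 qp) hgp hord.
    have := hat _ (Aatom qp) hle' => hs.
    apply: qne; apply/eqP; rewrite -(dvdn_prime2 qp pp).
    have : models (A_var p) (Zs q).
      by apply/hs/Zs_A; rewrite ?(prime_gt1 qp) ?(prime_gt0 qp) ?dvdnn.
    by move/Zs_A; apply; rewrite ?(prime_gt1 qp) ?(prime_gt0 pp).
  exists (logn p d).
  have hpn : p.-nat d.
    apply/pnatP => // q qp qd; rewrite inE; apply/eqP; apply: NNPP => hne'.
    by apply: hno; exists q.
  by rewrite -p_part part_pnat_id.
have [b0 hb0] := hpow k k0 hCk.
have [b [hb hbmin]] := ex_min (P := fun b => le C (A_var (p ^ b))) hb0.
exists b; apply: le_antisym => //.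
have b0' : 0 < b.
  rewrite lt0n; apply/eqP => eb; rewrite eb expn0 in hb.
  by apply: ntC => S /hb; apply: A1_triv.
have pb0 : 0 < p ^ b.-1 by rewrite expn_gt0 prime_gt0.
have hlt : b.-1 < b by rewrite ltn_predL.
have [S [hS hnA]] := not_le_ex (hbmin b.-1 hlt).
have [s [t hst]] := not_models_A hnA.
have pB0 : 0 < p ^ b by rewrite expn_gt0 prime_gt0.
move/modelsA: (hb S hS) => hA.
set u := pw s (p ^ b).-1.
have uu : csg_op u u = u by apply: hA.
have us : csg_op u s = s by apply: hA.
have hsp : upw u s (p ^ b) = u by rewrite -(prednK pB0) upwS_pw.
apply: (ORD hS uu us pB0 hsp) => j hj.
have hg := upw_gcd uu hj hsp.
have : gcdn j (p ^ b) %| p ^ b := dvdn_gcdr _ _.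
case/(dvdn_pfactor _ _ pp) => c hc hgc.
case: (ltnP c b) => hcb.
  exfalso; apply: hst.
  have hdiv : p ^ c %| p ^ b.-1 by rewrite dvdn_exp2l // -ltnS prednK.
  have : upw u s (p ^ b.-1) = u.
    by rewrite -(divnK hdiv) mulnC upw_mul_u // -hgc.
  by rewrite -(prednK pb0) upwS_pw // => ->; apply: hA.
have ecb : c = b by apply/eqP; rewrite eqn_leq hcb andbT; move: hc.
rewrite ecb in hgc; rewrite -hgc; exact: dvdn_gcdl.
Qed.

Lemma chain p C1 C2 : prime p -> UAS (A_var p) C1 -> UAS (A_var p) C2 ->
  le C1 C2 \/ le C2 C1.
Proof.
move=> pp h1 h2; have [b1 e1] := UA_A_group pp h1; have [b2 e2] := UA_A_group pp h2.
have pe : forall b, 0 < p ^ b by move=> b; rewrite expn_gt0 prime_gt0.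
case: (leqP b1 b2) => hb; [left|right].
  apply: (le_same_l (same_sym e1)); apply: (le_same_r (same_sym e2)).
  by apply: A_div => //; exact: dvdn_exp2l.
apply: (le_same_l (same_sym e2)); apply: (le_same_r (same_sym e1)).
by apply: A_div => //; apply: dvdn_exp2l; exact: ltnW.
Qed.

Lemma UA_Ap p : prime p -> UAS (A_var p) (A_var (p * p)).
Proof.
move=> pp; have p0 := prime_gt0 pp; have p1 := prime_gt1 pp.
have pp0 : 0 < p * p by rewrite muln_gt0 p0.
have pp1 : 1 < p * p by rewrite (leq_trans p1) // leq_pmulr.
split; first by apply: A_div => //; exact: dvdn_mulr.
split.
  move=> h; have : models (A_var p) (Zs (p * p)).
    by apply/h/Zs_A => //; exact: dvdnn.
  move/Zs_A => /(_ pp1 p0) hd; have := dvdn_leq p0 hd.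
  by rewrite leqNgt ltn_Pmull.
move=> B hB hBle; case: (atom_class hB) => [hs|[hs|[q [qp hs]]]].
- exfalso; apply: (@S2_notA (p * p)); apply: hBle; apply/hs; exact: S2_SL.
- exfalso; apply: (@N2_notA (p * p)); apply: hBle; apply/hs; exact: N2_ZM.
- have : models (A_var (p * p)) (Zs q).
    apply: hBle; apply/hs/Zs_A; rewrite ?(prime_gt1 qp) ?(prime_gt0 qp) ?dvdnn //.
  move/Zs_A => /(_ (prime_gt1 qp) pp0); rewrite Euclid_dvdM // orbb dvdn_prime2 //.
  by move/eqP => eqp; rewrite -eqp.
Qed.

Definition c2_var : presentation := fun e => e = ((0, [:: 1; 2]), (3, [:: 4; 5])).
Definition c1_var : presentation := fun e =>
  e = ((0, [:: 1; 2; 3]), (4, [:: 5; 6; 7])) \/ e = ((0, [:: 0]), (4, [:: 5; 6; 7])).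

Definition opC3 (i j : nat) : nat := if (i == 0) && (j == 0) then 1 else 2.
Lemma opC3_l i j k : opC3 (opC3 i j) k = 2.
Proof.
have : opC3 i j != 0 by rewrite /opC3; case: ifP.
by move/negbTE => h; rewrite {1}/opC3 h.
Qed.
Lemma opC3A i j k : opC3 i (opC3 j k) = opC3 (opC3 i j) k.
Proof.
have : opC3 j k != 0 by rewrite /opC3; case: ifP.
by move/negbTE => h; rewrite opC3_l {1}/opC3 h andbF.
Qed.
Lemma opC3C i j : opC3 i j = opC3 j i.
Proof. by rewrite /opC3 andbC. Qed.
Definition C3 : comSemigroup := @ComSemigroup nat opC3 opC3A opC3C.

Definition fT := option (bool * bool * bool).
Definition opF (X Y : fT) : fT :=
  match X, Y with
  | Some (a1, b1, c1), Some (a2, b2, c2) =>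
    if [&& a1 || b1 || c1, a2 || b2 || c2, ~~ (a1 && a2), ~~ (b1 && b2) & ~~ (c1 && c2)]
    then Some (a1 || a2, b1 || b2, c1 || c2) else None
  | _, _ => None
  end.
Lemma opFA x y z : opF x (opF y z) = opF (opF x y) z.
Proof. by move: x y z; do 3! case=> [[[[] []] []]|]. Qed.
Lemma opFC x y : opF x y = opF y x.
Proof. by move: x y; do 2! case=> [[[[] []] []]|]. Qed.
Lemma opF3 x y z : opF (opF x y) z = None \/ opF (opF x y) z = Some (true, true, true).
Proof. by move: x y z; do 3! case=> [[[[] []] []]|]; auto. Qed.
Lemma opF4 x y z w : opF (opF (opF x y) z) w = None.
Proof. by case: (opF3 x y z) => ->; case: w => [[[[] []] []]|]. Qed.
Lemma opFxx x : opF x x = None.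
Proof. by case: x => [[[[] []] []]|]. Qed.
Definition FS : comSemigroup := @ComSemigroup fT opF opFA opFC.

Lemma null_sat (S : comSemigroup) (w1 w2 : word) : models ZM_var S ->
  w1.2 != [::] -> w2.2 != [::] -> sat S (w1, w2).
Proof.
move=> hN; case: w1 => h1 [|j1 t1] //; case: w2 => h2 [|j2 t2] // _ _ v.
rewrite /= /weval /= -/(lprod v _ t1) -/(lprod v _ t2) !null_lprod //.
exact: null_const.
Qed.

Lemma UA_ZM_c (C : presentation) (M : comSemigroup) :
  (forall e, C e -> e.1.2 != [::] /\ e.2.2 != [::]) -> models C M ->
  ~ models ZM_var M -> ~ models C S2 ->
  (forall q, prime q -> ~ models C (Zs q)) -> UAS ZM_var C.
Proof.
move=> hC hM hMZ hS2 hZ.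
split; first by move=> S hS e /hC [h1 h2]; case: e h1 h2 => w1 w2 /= h1 h2; exact: null_sat.
split; first by move=> h; apply: hMZ; apply/h.
move=> B hB hBle; case: (atom_class hB) => [hs|[hs|[q [qp hs]]]] //.
- by exfalso; apply: hS2; apply: hBle; apply/hs; exact: S2_SL.
- exfalso; apply: (hZ q qp); apply: hBle; apply/hs/Zs_A; rewrite ?(prime_gt1 qp) ?(prime_gt0 qp) ?dvdnn //.
Qed.

Lemma Zs_one q : prime q -> (1 : Zs q)%R <> 0%R.
Proof. by move=> qp /eqP; rewrite GRing.oner_eq0. Qed.

Lemma UA_c1 : UAS ZM_var c1_var.
Proof.
apply: (@UA_ZM_c _ FS).
- by move=> e [->|->].
- by move=> e [->|->] v; rewrite /sat /weval /= ?opF4 ?opFxx.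
- move/modelsZM => /(_ (Some (true, false, false)) (Some (false, true, false)) (Some (false, false, true))).
  by [].
- move=> h; have := h _ (or_introl erefl) (fun j => j < 4); by rewrite /sat /weval.
- move=> q qp h; have := h _ (or_introl erefl) (fun j => if j == 0 then 1%R else 0%R).
  rewrite /sat /weval /= ?GRing.addr0 ?GRing.add0r; exact: Zs_one.
Qed.

Lemma UA_c2 : UAS ZM_var c2_var.
Proof.
apply: (@UA_ZM_c _ C3).
- by move=> e ->.
- by move=> e -> v; rewrite /sat /weval /= !opC3_l.
- by move/modelsZM => /(_ 0 0 0).
- move=> h; have := h _ erefl (fun j => j < 3); by rewrite /sat /weval.
- move=> q qp h; have := h _ erefl (fun j => if j == 0 then 1%R else 0%R).
  rewrite /sat /weval /= ?GRing.addr0 ?GRing.add0r; exact: Zs_one.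
Qed.

Lemma c1_not_c2 : ~ le c1_var c2_var.
Proof.
move=> h; have hF : models c1_var FS.
  by move=> e [->|->] v; rewrite /sat /weval /= ?opF4 ?opFxx.
have := h _ hF _ erefl (fun j => if j == 1 then Some (false, true, false)
   else if j == 2 then Some (false, false, true) else Some (true, false, false)).
by [].
Qed.

Lemma c2_not_c1 : ~ le c2_var c1_var.
Proof.
move=> h; have hC : models c2_var C3 by move=> e -> v; rewrite /sat /weval /= !opC3_l.
by have := h _ hC _ (or_intror erefl) (fun _ => 0).
Qed.

Definition fle i j := FEq (LMeet (LVar i) (LVar j)) (LVar i).
Definition fzero z y := FAll y (fle z y).
Definition fnt a z y := FEx z (FAnd (fzero z y) (FNot (FEq (LVar a) (LVar z)))).
Definition fatom a z y w := FAnd (fnt a z y)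
  (FAll y (FAll z (FImp (fzero z w)
     (FOr (fle a y) (FEq (LMeet (LVar a) (LVar y)) (LVar z)))))).
Definition fUA a c b t1 t2 t3 := FAnd (fle a c) (FAnd (FNot (FEq (LVar a) (LVar c)))
  (FAll b (FImp (fatom b t1 t2 t3) (FImp (fle b c) (FEq (LVar b) (LVar a)))))).

Lemma updE env n V m : upd env n V m = if m == n then V else env m.
Proof. by []. Qed.

Lemma triv_T : triv T_var.
Proof. by move=> S /modelsT. Qed.



Lemma triv_le X : triv X <-> forall V, le X V.
Proof.
split=> [h V S hS|h S hS]; first by apply: triv_models; apply: h.
by apply/modelsT; apply: h hS.
Qed.

Lemma holds_fle env i j : holds env (fle i j) <-> le (env i) (env j).
Proof. exact: same_meet. Qed.

Lemma holds_fzero env z y : z != y -> (holds env (fzero z y) <-> triv (env z)).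
Proof.
move=> hzy; rewrite triv_le; split=> h V.
  have hv : holds (upd env y V) (fle z y) := h V.
  by move: hv; rewrite holds_fle !updE eqxx (negbTE hzy).
change (holds (upd env y V) (fle z y)).
by rewrite holds_fle !updE eqxx (negbTE hzy).
Qed.

Lemma holds_fnt env a z y : a != z -> z != y ->
  (holds env (fnt a z y) <-> ~ triv (env a)).
Proof.
move=> haz hzy; split.
  case=> V [h1 h2].
  have {}h1 : holds (upd env z V) (fzero z y) := h1.
  have {}h2 : ~ same_variety (upd env z V a) (upd env z V z) := h2.
  move: h1 h2; rewrite holds_fzero // !updE eqxx (negbTE haz) => hV hne ht; apply: hne.
  by apply/(same_triv _ hV).
move=> nt; exists T_var; split.
  change (holds (upd env z T_var) (fzero z y)).
  by rewrite holds_fzero // updE eqxx; exact: triv_T.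
change (~ same_variety (upd env z T_var a) (upd env z T_var z)).
rewrite !updE eqxx (negbTE haz) => hs; apply: nt.
exact: (proj1 (same_triv _ triv_T) hs).
Qed.

Lemma holds_fatom env a z y w : a != z -> a != y -> z != y -> z != w ->
  (holds env (fatom a z y w) <-> atomS (env a)).
Proof.
move=> haz hay hzy hzw.
have E : forall Y Z, upd (upd env y Y) z Z a = env a /\ upd (upd env y Y) z Z y = Y /\
                     upd (upd env y Y) z Z z = Z.
  by move=> Y Z; rewrite !updE (negbTE haz) (negbTE hay) [y == z]eq_sym (negbTE hzy) !eqxx.
pose F := FImp (fzero z w) (FOr (fle a y) (FEq (LMeet (LVar a) (LVar y)) (LVar z))).
have K : forall Y Z, holds (upd (upd env y Y) z Z) F <->
     (triv Z -> le (env a) Y \/ same_variety (vmeet (env a) Y) Z).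
  move=> Y Z; have [e1 [e2 e3]] := E Y Z.
  set env' := upd (upd env y Y) z Z.
  have -> : holds env' F
    = (holds env' (fzero z w) -> holds env' (fle a y) \/
       same_variety (vmeet (env' a) (env' y)) (env' z)) by [].
  by rewrite holds_fzero // holds_fle /env' e1 e2 e3.
have -> : holds env (fatom a z y w) =
  (holds env (fnt a z y) /\ forall Y Z, holds (upd (upd env y Y) z Z) F) by [].
split.
  case=> h1 h2; split; first exact: (proj1 (holds_fnt env haz hzy) h1).
  move=> Y; have := proj1 (K Y T_var) (h2 Y T_var) triv_T.
  case=> [|hs]; [by left|right].
  exact: (proj1 (same_triv _ triv_T) hs).
case=> nt hY; split; first exact/holds_fnt.
move=> Y Z; apply/K => hZ.
case: (hY Y) => [|ht]; [by left|right].
exact: (proj2 (same_triv _ hZ) ht).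
Qed.

Lemma holds_fUA env a c b t1 t2 t3 : a != c -> a != b -> c != b ->
  b != t1 -> b != t2 -> t1 != t2 -> t1 != t3 ->
  (holds env (fUA a c b t1 t2 t3) <-> UAS (env a) (env c)).
Proof.
move=> hac hab hcb h1 h2 h12 h13.
pose F := FImp (fatom b t1 t2 t3) (FImp (fle b c) (FEq (LVar b) (LVar a))).
have K : forall B, holds (upd env b B) F <->
     (atomS B -> le B (env c) -> same_variety B (env a)).
  move=> B; set env' := upd env b B.
  have -> : holds env' F = (holds env' (fatom b t1 t2 t3) -> holds env' (fle b c) ->
       same_variety (env' b) (env' a)) by [].
  rewrite holds_fatom // holds_fle /env' !updE eqxx (negbTE hab) (negbTE hcb).
  by [].
have -> : holds env (fUA a c b t1 t2 t3) = (holds env (fle a c) /\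
   ~ same_variety (env a) (env c) /\ forall B, holds (upd env b B) F) by [].
split.
  case=> /holds_fle hle [hne hB]; split=> //; split=> // B.
  exact: (proj1 (K B) (hB B)).
case=> hle [hne hB]; split; first exact/holds_fle.
split=> // B; apply/K; exact: hB.
Qed.

Definition phiSL := FAnd (fatom 0 1 2 3) (FNot (FEx 1 (fUA 0 1 2 3 4 5))).
Definition phiZM := FAnd (fatom 0 1 2 3) (FEx 1 (FEx 2 (FAnd (fUA 0 1 3 4 5 6)
  (FAnd (fUA 0 2 3 4 5 6) (FAnd (FNot (fle 1 2)) (FNot (fle 2 1))))))).
Definition phiA := FAnd (fatom 0 1 2 3) (FAnd (FEx 1 (fUA 0 1 2 3 4 5))
  (FAll 1 (FAll 2 (FImp (fUA 0 1 3 4 5 6) (FImp (fUA 0 2 3 4 5 6)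
     (FOr (fle 1 2) (fle 2 1))))))).

Lemma holds_exUA env : holds env (FEx 1 (fUA 0 1 2 3 4 5)) <-> exists C, UAS (env 0) C.
Proof.
split.
  case=> C hC; exists C.
  have : holds (upd env 1 C) (fUA 0 1 2 3 4 5) := hC.
  by rewrite holds_fUA // !updE.
case=> C hC; exists C.
change (holds (upd env 1 C) (fUA 0 1 2 3 4 5)).
by rewrite holds_fUA // !updE.
Qed.

Lemma holds_2UA env C1 C2 :
  (holds (upd (upd env 1 C1) 2 C2) (fUA 0 1 3 4 5 6) <-> UAS (env 0) C1) /\
  (holds (upd (upd env 1 C1) 2 C2) (fUA 0 2 3 4 5 6) <-> UAS (env 0) C2) /\
  (holds (upd (upd env 1 C1) 2 C2) (fle 1 2) <-> le C1 C2) /\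
  (holds (upd (upd env 1 C1) 2 C2) (fle 2 1) <-> le C2 C1).
Proof. by rewrite !holds_fUA // !holds_fle. Qed.

Lemma sem_SL env : holds env phiSL <-> same_variety (env 0) SL_var.
Proof.
split.
  case=> /holds_fatom hA hn; have {}hA := hA isT isT isT isT.
  have hn' : ~ exists C, UAS (env 0) C by move=> h; apply: hn; apply/holds_exUA.
  case: (atom_class hA) => [//|[hs|[p [pp hs]]]].
    by exfalso; apply: hn'; exists c1_var; exact: UAS_same (same_sym hs) UA_c1.
  by exfalso; apply: hn'; exists (A_var (p * p)); exact: UAS_same (same_sym hs) (UA_Ap pp).
move=> hs; split; first by apply/holds_fatom => //; exact: atom_same (same_sym hs) SLatom.
move/holds_exUA => -[C hC]; apply: (noUA_SL (C := C)); exact: UAS_same hs hC.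
Qed.

Lemma sem_ZM env : holds env phiZM <-> same_variety (env 0) ZM_var.
Proof.
split.
  case=> /holds_fatom hA [C1 [C2]]; have {}hA := hA isT isT isT isT.
  have [E1 [E2 [E3 E4]]] := holds_2UA env C1 C2.
  case=> /E1 h1 [/E2 h2 [n12 n21]].
  case: (atom_class hA) => [hs|[//|[p [pp hs]]]].
    by exfalso; apply: (noUA_SL (C := C1)); exact: UAS_same hs h1.
  exfalso; case: (chain pp (UAS_same hs h1) (UAS_same hs h2)) => h.
    by apply: n12; apply/E3.
  by apply: n21; apply/E4.
move=> hs; split; first by apply/holds_fatom => //; exact: atom_same (same_sym hs) ZMatom.
exists c1_var, c2_var.
have [E1 [E2 [E3 E4]]] := holds_2UA env c1_var c2_var.
split; first by apply/E1; exact: UAS_same (same_sym hs) UA_c1.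
split; first by apply/E2; exact: UAS_same (same_sym hs) UA_c2.
split; first by move/E3; exact: c1_not_c2.
by move/E4; exact: c2_not_c1.
Qed.

Lemma sem_A env : holds env phiA <-> exists p, prime p /\ same_variety (env 0) (A_var p).
Proof.
split.
  case=> /holds_fatom hA [/holds_exUA [C hC] hch]; have {}hA := hA isT isT isT isT.
  case: (atom_class hA) => [hs|[hs|//]].
    by exfalso; apply: (noUA_SL (C := C)); exact: UAS_same hs hC.
  exfalso; have [E1 [E2 [E3 E4]]] := holds_2UA env c1_var c2_var.
  set env' := upd (upd env 1 c1_var) 2 c2_var.
  have hh : holds env' (fUA 0 1 3 4 5 6) -> holds env' (fUA 0 2 3 4 5 6) ->
    holds env' (fle 1 2) \/ holds env' (fle 2 1) := hch c1_var c2_var.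
  move: hh; rewrite /env' E1 E2 => /(_ (UAS_same (same_sym hs) UA_c1) (UAS_same (same_sym hs) UA_c2)).
  by case=> [/E3|/E4]; [apply: c1_not_c2|apply: c2_not_c1].
move=> [p [pp hs]]; split; first by apply/holds_fatom => //; exact: atom_same (same_sym hs) (Aatom pp).
split.
  apply/holds_exUA; exists (A_var (p * p)); exact: UAS_same (same_sym hs) (UA_Ap pp).
move=> C1 C2; have [E1 [E2 [E3 E4]]] := holds_2UA env C1 C2.
set env' := upd (upd env 1 C1) 2 C2.
change (holds env' (fUA 0 1 3 4 5 6) -> holds env' (fUA 0 2 3 4 5 6) ->
    holds env' (fle 1 2) \/ holds env' (fle 2 1)).
rewrite /env' E1 E2 E3 E4 => h1 h2.
exact: chain pp (UAS_same hs h1) (UAS_same hs h2).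
Qed.

Theorem mainTheorem10 :
  [/\ definable_set (fun V => exists p, prime p /\ same_variety V (A_var p)),
      definable_elem SL_var
    & definable_elem ZM_var].
Proof.
split.
- by exists phiA => env; exact: sem_A.
- by exists phiSL => env; exact: sem_SL.
- by exists phiZM => env; exact: sem_ZM.
Qed.
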